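(* For any fair allocation instance with agents $a_1,\dots,a_n$, a finite set $M$ of indivisible goods, XOS valuations $v_1,\dots,v_n$, and entitlements $b_1,\dots,b_n>0$, there exists an allocation $A=(A_1,\dots,A_n)$ of $M$ such that $v_i(A_i)\ge\frac1n\mathsf{WMMS}_i$ for every agent $a_i$.
   Context: A valuation $v:2^M\to\mathbb{R}_{\ge0}$ is XOS if there is a finite collection of additive functions $\{\ell_t\}_t$ with nonnegative item values such that $v(S)=\max_t\ell_t(S)$ for all $S\subseteq M$. An allocation is a partition of $M$ into bundles $A_1,\dots,A_n$, with $A_i$ given to $a_i$. Let $\Pi_n$ be the set of partitions $(S_1,\dots,S_n)$ of $M$ into $n$ bundles. The weighted maximin share of $a_i$ is $\mathsf{WMMS}_i=\max_{S\in\Pi_n}\min_{j\in[n]}v_i(S_j)\frac{b_i}{b_j}$. *)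

(* Defs.v *)
From mathcomp Require Import all_boot all_order all_algebra.
Set Implicit Arguments. Unset Strict Implicit. Unset Printing Implicit Defensive.
Import Order.TTheory GRing.Theory Num.Theory.
Local Open Scope ring_scope.

Definition additive_val (R : realFieldType) (M : finType) (l : M -> R) (S : {set M}) : R :=
  \sum_(x in S) l x.

Definition XOS (R : realFieldType) (M : finType) (v : {set M} -> R) : Prop :=
  exists (k : nat) (l : 'I_k.+1 -> M -> R),
    (forall t x, 0 <= l t x) /\
    (forall S : {set M}, v S = \big[Num.max/additive_val (l ord0) S]_(t < k.+1) additive_val (l t) S).

(* A partition of M into m bundles is encoded as a map M -> 'I_m;
   bundle j is the preimage of j. *)
Definition bundle (M : finType) (m : nat) (P : {ffun M -> 'I_m}) (j : 'I_m) : {set M} :=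
  [set x | P x == j].

Definition WMMS (R : realFieldType) (M : finType) (n : nat)
  (v : 'I_n.+1 -> {set M} -> R) (b : 'I_n.+1 -> R) (i : 'I_n.+1) : R :=
  let val P := \big[Num.min/ v i (bundle P ord0) * (b i / b ord0)]_(j < n.+1)
                   (v i (bundle P j) * (b i / b j)) in
  \big[Num.max/ val [ffun=> ord0]]_(P : {ffun M -> 'I_n.+1}) val P.

(* Main.v *)
Require Import Defs.
From mathcomp Require Import all_boot all_order all_algebra.
From mathcomp Require Import zify lra.
Import Order.TTheory GRing.Theory Num.Theory.
Local Open Scope ring_scope.
Set Implicit Arguments. Unset Strict Implicit.

Lemma addv_split (R : realFieldType) (M : finType) (l : M -> R) (D S : {set M}) :
  additive_val l D = additive_val l (D :&: S) + additive_val l (D :\: S).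
Proof. by rewrite /additive_val (big_setID S). Qed.

Lemma addv_ge0 (R : realFieldType) (M : finType) (l : M -> R) S :
  (forall x, 0 <= l x) -> 0 <= additive_val l S.
Proof. by move=> h; apply: sumr_ge0. Qed.

Lemma xos_props (R : realFieldType) (M : finType) (v : {set M} -> R) : XOS v ->
  [/\ (forall S T : {set M}, S \subset T -> v S <= v T),
      (forall D S : {set M}, v D <= v (D :\: S) + v (D :&: S)),
      v set0 = 0 & (forall S : {set M}, 0 <= v S)].
Proof.
case=> k [l [l0 hv]].
have le_v S t : additive_val (l t) S <= v S.
  by rewrite hv (bigD1 t) //= le_max lexx.
have ex_v S : exists t, v S = additive_val (l t) S.
  rewrite hv; apply: (big_ind (fun x => exists t, x = additive_val (l t) S)).
  - by exists ord0.
  - move=> x y [t1 ->] [t2 ->]; rewrite maxEle; case: ifP => _; [by exists t2 | by exists t1].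
  - by move=> t _; exists t.
have vge0 S : 0 <= v S.
  by case: (ex_v S) => t ->; apply: addv_ge0.
split => //.
- move=> S T sST; case: (ex_v S) => t ->; apply: le_trans (le_v T t).
  rewrite (addv_split (l t) T S).
  have -> : T :&: S = S by apply/setIidPr.
  rewrite lerDl; exact: addv_ge0.
- move=> D S; case: (ex_v D) => t ->; rewrite (addv_split (l t) D S) addrC.
  by apply: lerD; apply: le_v.
- by case: (ex_v set0) => t ->; rewrite /additive_val big_set0.
Qed.

Definition inv_ok (R : realFieldType) (M : finType) (N : nat)
  (v : 'I_N -> {set M} -> R) (b c : 'I_N -> R) (K : {set 'I_N}) (G : {set M}) (i : 'I_N) :=
  exists (J : {set 'I_N}) (D : 'I_N -> {set M}),
   [/\ leq #|[set j in K | b i <= b j]| #|J|,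
       (forall j, j \in J -> D j \subset G /\ #|K|%:R * c i <= v i (D j)) &
       (forall j j', j \in J -> j' \in J -> j != j' -> [disjoint D j & D j'])].

Lemma main_alloc (R : realFieldType) (M : finType) (n : nat)
  (v : 'I_n.+1 -> {set M} -> R) (b c : 'I_n.+1 -> R)
  (vmono : forall i (S T : {set M}), S \subset T -> v i S <= v i T)
  (vloss : forall i (D S : {set M}), v i D <= v i (D :\: S) + v i (D :&: S))
  (v0 : forall i, v i set0 <= c i)
  (c0 : forall i, 0 <= c i) :
  forall k (K : {set 'I_n.+1}) (G : {set M}), #|K| = k ->
  (forall i, i \in K -> inv_ok v b c K G i) ->
  exists f : {ffun M -> 'I_n.+1},
    forall i, i \in K -> c i <= v i [set x | (x \in G) && (f x == i)].
Proof.
elim=> [|k IH] K G cardK hinv.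
  exists [ffun=> ord0] => i iK; move/eqP: cardK; rewrite cards_eq0 => /eqP K0.
  by rewrite K0 inE in iK.
have [i0 i0K] : exists i0, i0 \in K by apply/card_gt0P; rewrite cardK.
pose PS := fun S : {set M} => (S \subset G) && [exists i in K, c i <= v i S].
have PG : PS G.
  rewrite /PS subxx /=; apply/existsP; exists i0; rewrite i0K /=.
  have [J [D [cJ hD _]]] := hinv i0 i0K.
  have : (0 < #|J|)%N.
    apply: leq_trans cJ; apply/card_gt0P; exists i0; by rewrite inE i0K lexx.
  case/card_gt0P => j jJ; have [sDG hv] := hD j jJ.
  apply: le_trans (vmono _ _ _ sDG); apply: le_trans hv.
  rewrite cardK -[X in X <= _]mul1r ler_wpM2r // ler1n ltn0Sn //.
have [S PSS Smin] := @arg_minnP _ G PS (fun S => #|S|) PG.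
case/andP: PSS => sSG /existsP[iw /andP[iwK iwS]].
have Smin' : forall y i, y \in S -> i \in K -> v i (S :\ y) < c i.
  move=> y i yS iK; rewrite ltNge; apply/negP => hi.
  have : PS (S :\ y).
    rewrite /PS (subset_trans (subD1set S y) sSG) /=; apply/existsP; exists i; by rewrite iK hi.
  move/Smin; rewrite [X in (X <= _)%N](cardsD1 y) yS add1n ltnn; done.
have hw0 : (iw \in K) && (c iw <= v iw S) by rewrite iwK iwS.
have [w /andP[wK wS] wmax] := @arg_maxP _ _ _ iw (fun i => (i \in K) && (c i <= v i S)) b hw0.
have cardK' : #|K :\ w| = k by move: cardK; rewrite (cardsD1 w K) wK add1n => [[]].
have hinv' : forall i, i \in K :\ w -> inv_ok v b c (K :\ w) (G :\: S) i.
  move=> i; rewrite in_setD1 => /andP[iw' iK].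
  have [J [D [cJ hD hdis]]] := hinv i iK.
  pose bad j := [&& c i <= v i S, S \subset D j & S != set0].
  pose B := [set j | bad j].
  exists (J :\: B), (fun j => D j :\: S); split.
  - have badle : (#|J :&: B| <= 1)%N.
      apply/card_le1_eqP => j j'; rewrite !inE => /andP[jJ /and3P[_ sj nz]] /andP[j'J /and3P[_ sj' _]].
      apply/eqP; apply: contraNT nz => jj'.
      have jj2 : j != j' by rewrite eq_sym.
      have := hdis j j' jJ j'J jj2; rewrite -setI_eq0 => /eqP dis.
      by rewrite -subset0 -dis subsetI sj sj'.
    have splitJ := cardsID B J.
    case: (leP (b i) (b w)) => hiw.
    + have e : #|[set j in K | b i <= b j]| = (#|[set j in K :\ w | b i <= b j]|).+1.
        rewrite (cardsD1 w [set j in K | b i <= b j]) inE wK hiw add1n; congr (_.+1).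
        by apply: eq_card => j; rewrite !inE andbA.
      have h1 : leq (#|[set j in K :\ w | b i <= b j]|.+1) #|J| by rewrite -e.
      rewrite -splitJ in h1; rewrite -ltnS; apply: leq_trans h1 _; exact: (leq_add badle (leqnn _)).
    + have Bn : forall j, ~~ bad j.
        move=> j; rewrite /bad; apply/negP => /and3P[hS _ _].
        have := wmax i; rewrite iK hS => /(_ isT) hle.
        have hle2 : b i <= b w := hle.
        by rewrite leNgt hiw in hle2.
      have -> : J :\: B = J by apply/setP => j; rewrite !inE (negbTE (Bn j)).
      apply: leq_trans cJ; apply: subset_leq_card; apply/subsetP => j; rewrite !inE.
      by case/andP => /andP[_ ->] ->.
  - move=> j; rewrite !inE => /andP[nb jJ]; have [sDG hvD] := hD j jJ.
    split; first exact: setSD.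
    have hloss : v i (D j :&: S) <= c i.
      move: nb; rewrite /bad; case hS: (c i <= v i S) => /=; last first.
        move=> _; apply: le_trans (vmono _ _ _ (subsetIr _ _)) _; apply/ltW; rewrite ltNge hS //.
      case sS: (S \subset D j) => /=; last first.
        move=> _; move/negbT: sS => /subsetPn [y yS yD].
        apply: ltW; apply: le_lt_trans (Smin' y i yS iK); apply: vmono.
        apply/subsetP => x; rewrite !inE => /andP[xD xS]; rewrite xS andbT.
        by apply/eqP => exy; rewrite -exy xD in yD.
      by rewrite negbK => /eqP ->; rewrite setI0.
    have hl := vloss i (D j) S.
    move: hvD; rewrite cardK cardK' -natr1 mulrDl mul1r => hvD.
    lra.
  - move=> j j'; rewrite !inE => /andP[_ jJ] /andP[_ j'J] jj'.
    apply: disjointWl (subsetDl _ _) _; apply: disjointWr (subsetDl _ _) _; exact: hdis.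
have [f' hf'] := IH (K :\ w) (G :\: S) cardK' hinv'.
exists [ffun x => if x \in S then w else f' x] => i iK.
case: (eqVneq i w) => [-> | iw'].
  apply: le_trans wS (vmono _ _ _ _); apply/subsetP => x xS.
  by rewrite inE ffunE xS (subsetP sSG _ xS) eqxx.
have iK' : i \in K :\ w by rewrite in_setD1 iw' iK.
apply: le_trans (hf' i iK') (vmono _ _ _ _); apply/subsetP => x; rewrite !inE ffunE.
by case/andP => /andP[xS xG] fx; rewrite xG (negbTE xS).
Qed.

Theorem theorem3 (R : realFieldType) (M : finType) (n : nat)
  (v : 'I_n.+1 -> {set M} -> R) (b : 'I_n.+1 -> R) :
  (forall i, XOS (v i)) -> (forall i, 0 < b i) ->
  exists A : {ffun M -> 'I_n.+1},
    forall i : 'I_n.+1, v i (bundle A i) >= (n.+1%:R)^-1 * WMMS v b i.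
Proof.
move=> hX hb.
have vmono i (S T : {set M}) : S \subset T -> v i S <= v i T.
  by case: (xos_props (hX i)) => h _ _ _; apply: h.
have vloss i (D S : {set M}) : v i D <= v i (D :\: S) + v i (D :&: S).
  by case: (xos_props (hX i)) => _ h _ _; apply: h.
have vset0 i : v i set0 = 0 by case: (xos_props (hX i)).
have vge0 i S : 0 <= v i S by case: (xos_props (hX i)) => _ _ _ h; apply: h.
have bratio i j : 0 <= b i / b j by apply: divr_ge0; apply: ltW.
pose val i (P : {ffun M -> 'I_n.+1}) :=
  \big[Num.min/ v i (bundle P ord0) * (b i / b ord0)]_(j < n.+1) (v i (bundle P j) * (b i / b j)).
have eW i : WMMS v b i = \big[Num.max/ val i [ffun=> ord0]]_(P : {ffun M -> 'I_n.+1}) val i P by [].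
have val0 i P : 0 <= val i P.
  apply: (big_ind (fun x => 0 <= x)) => //; first exact: mulr_ge0.
    by move=> x y hx hy; rewrite le_min hx hy.
  by move=> j _; apply: mulr_ge0.
have W0 i : 0 <= WMMS v b i.
  rewrite eW; apply: (big_ind (fun x => 0 <= x)) => //.
  by move=> x y hx hy; rewrite le_max hx.
pose c i := (n.+1%:R)^-1 * WMMS v b i.
have c0 i : 0 <= c i by apply: mulr_ge0 => //; rewrite invr_ge0 ler0n.
have hinv : forall i, i \in [set: 'I_n.+1] -> inv_ok v b c [set: 'I_n.+1] [set: M] i.
  move=> i _.
  have [P hP] : exists P, WMMS v b i = val i P.
    rewrite eW; apply: (big_ind (fun x => exists P, x = val i P)).
    - by exists [ffun=> ord0].
    - move=> x y [P1 ->] [P2 ->]; rewrite maxEle; case: ifP => _; [by exists P2 | by exists P1].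
    - by move=> P _; exists P.
  exists [set j | b i <= b j], (bundle P); split.
  - by apply: subset_leq_card; apply/subsetP => j; rewrite !inE.
  - move=> j; rewrite inE => hij; split; first exact: subsetT.
    rewrite cardsT card_ord /c mulrA mulfV ?pnatr_eq0 // mul1r hP.
    apply: le_trans (_ : _ <= v i (bundle P j) * (b i / b j)) _.
      by rewrite /val (bigD1 j) //= ge_min lexx.
    apply: ler_piMr => //; rewrite ler_pdivrMr // mul1r //.
  - move=> j j' _ _ jj'; rewrite -setI_eq0; apply/eqP/setP => x.
    rewrite !inE; case: eqP => // ->; exact: negbTE jj'.
have v0 i : v i set0 <= c i by rewrite vset0; exact: c0 i.
have cT : #|[set: 'I_n.+1]| = n.+1 by rewrite cardsT card_ord.
have [f hf] := @main_alloc R M n v b c vmono vloss v0 c0 n.+1 [set: 'I_n.+1] [set: M] cT hinv.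
exists f => i; apply: le_trans (hf i (in_setT i)) (vmono _ _ _ _).
by apply/subsetP => x; rewrite !inE.
Qed.
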